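(* Let $(\tilde\Theta^n_I)$ be a congruent family of covariant $n$-tensor fields on $\mathcal M_+(I)$, $I$ ranging over finite sets, and for a partition $\mathbf P$ of $\{1,\dots,n\}$, a finite set $I$ with $|I|\ge|\mathbf P|$ and $\lambda>0$ let $\theta^{\mathbf P}_{I,\lambda c_I}:=(\tilde\Theta^n_I)_{\lambda c_I}(\delta_{i_1},\dots,\delta_{i_n})$ for any multiindex $\vec i\in I^n$ with $\mathbf P(\vec i)=\mathbf P$ (this does not depend on the choice of $\vec i$). Suppose $\mathbf P_0$ is a partition of $\{1,\dots,n\}$ such that $\theta^{\mathbf P}_{I,\lambda c_I}=0$ for all partitions $\mathbf P<\mathbf P_0$, all $\lambda>0$ and all finite $I$ (for which it is defined). Then there is a continuous function $f_{\mathbf P_0}:(0,\infty)\to\mathbb R$ such that $\theta^{\mathbf P_0}_{I,\lambda c_I}=f_{\mathbf P_0}(\lambda)\,|I|^{n-|\mathbf P_0|}$ for all $\lambda>0$ and all finite sets $I$ with $|I|\ge|\mathbf P_0|$.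
   Context: For a finite set $I$: $\mathcal S(I)=\{\sum_{i\in I}x_i\delta_i:x_i\in\mathbb R\}$, $\mathcal M_+(I)=\{\sum\mu_i\delta_i:\mu_i>0\}$ (tangent space $\mathcal S(I)$), $c_I:=\frac1{|I|}\sum_{i\in I}\delta_i$. A covariant $n$-tensor field on $\mathcal M_+(I)$ is a continuously varying family of $n$-multilinear forms on $\mathcal S(I)$. A Markov kernel $K:I\to\mathcal P(I')$ between finite sets is a stochastic matrix $K(i)=\sum_{i'}K^i_{i'}\delta_{i'}$ with $K_*(\sum x_i\delta_i)=\sum_{i,i'}K^i_{i'}x_i\delta_{i'}$; it is congruent if there is a map $\kappa:I'\to I$ with $K^i_{i'}=0$ whenever $\kappa(i')\ne i$. The family is congruent if $(\tilde\Theta^n_{I'})_{K_*\mu}(K_*V_1,\dots,K_*V_n)=(\tilde\Theta^n_I)_\mu(V_1,\dots,V_n)$ for every congruent Markov kernel $K:I\to\mathcal P(I')$ between finite sets with $K_*(\mathcal M_+(I))\subset\mathcal M_+(I')$. For $\vec i\in I^n$, $\mathbf P(\vec i)$ is the partition of $\{1,\dots,n\}$ into classes of $k\sim l\iff i_k=i_l$. $|\mathbf P|$ is the number of blocks. Partitions are ordered by $\mathbf P\le\mathbf P'$ iff $\mathbf P$ is a subdivision (refinement) of $\mathbf P'$; $\mathbf P<\mathbf P'$ means $\mathbf P\le\mathbf P'$ and $\mathbf P\ne\mathbf P'$. *)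

(* Defs.v *)
From HB Require Import structures.
From mathcomp Require Import all_boot all_order all_algebra.
From mathcomp Require Import all_classical all_reals all_analysis.
Set Implicit Arguments. Unset Strict Implicit. Unset Printing Implicit Defensive.
Import Order.TTheory GRing.Theory Num.Theory.
Local Open Scope ring_scope.

Section Defs.
Variable R : realType.

(* S(I) is modelled as functions I -> R ; x = sum_i x i delta_i. *)
Definition posmeas (I : finType) (mu : I -> R) : Prop := forall i, 0 < mu i.

Definition delta_pt (I : finType) (i : I) : I -> R := fun j => if j == i then 1 else 0.

(* c_I scaled by lambda : lambda * (1/|I|) sum_i delta_i *)
Definition scaled_c (I : finType) (lambda : R) : I -> R := fun _ => lambda / #|I|%:R.

Definition tensor_field (n : nat) (I : finType) := (I -> R) -> ('I_n -> (I -> R)) -> R.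

Definition upd (n : nat) (I : finType) (V : 'I_n -> (I -> R)) (k : 'I_n) (x : I -> R) :
  'I_n -> (I -> R) := fun l => if l == k then x else V l.

Definition multilinear_at (n : nat) (I : finType) (T : tensor_field n I) (mu : I -> R) :=
  forall (V : 'I_n -> (I -> R)) (k : 'I_n) (a : R) (x y : I -> R),
    T mu (upd V k (fun i => a * x i + y i)) = a * T mu (upd V k x) + T mu (upd V k y).

(* continuity of mu |-> T mu V on M_+(I) (epsilon-delta for the max-norm on R^I);
   for multilinear forms in finite dimension this is continuity of the tensor field. *)
Definition continuous_field (n : nat) (I : finType) (T : tensor_field n I) :=
  forall (V : 'I_n -> (I -> R)) (mu : I -> R), posmeas mu ->
    forall eps : R, 0 < eps -> exists2 d : R, 0 < d &
      forall nu : I -> R, posmeas nu -> (forall i, `|nu i - mu i| < d) ->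
        `|T nu V - T mu V| < eps.

Definition covariant_tensor_field (n : nat) (I : finType) (T : tensor_field n I) :=
  (forall mu, posmeas mu -> multilinear_at T mu) /\ continuous_field T.

(* Markov kernels K : I -> P(I') as stochastic matrices K i i' *)
Definition markov_kernel (I I' : finType) (K : I -> I' -> R) : Prop :=
  (forall i i', 0 <= K i i') /\ (forall i, \sum_(i' : I') K i i' = 1).

Definition congruent_kernel (I I' : finType) (K : I -> I' -> R) : Prop :=
  markov_kernel K /\
  exists kappa : I' -> I, forall i i', kappa i' != i -> K i i' = 0.

Definition push (I I' : finType) (K : I -> I' -> R) (x : I -> R) : I' -> R :=
  fun i' => \sum_(i : I) K i i' * x i.

Definition congruent_family (n : nat) (Theta : forall I : finType, tensor_field n I) :=
  (forall I : finType, covariant_tensor_field (Theta I)) /\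
  forall (I I' : finType) (K : I -> I' -> R),
    congruent_kernel K ->
    (forall mu : I -> R, posmeas mu -> posmeas (push K mu)) ->
    forall (mu : I -> R), posmeas mu -> forall V : 'I_n -> (I -> R),
      Theta I' (push K mu) (fun k => push K (V k)) = Theta I mu V.

End Defs.

Definition part_of (n : nat) (I : finType) (iv : 'I_n -> I) : {set {set 'I_n}} :=
  preim_partition iv [set: 'I_n].

Definition refines (n : nat) (P P' : {set {set 'I_n}}) : Prop :=
  forall B, B \in P -> exists2 C, C \in P' & B \subset C.

Definition strictly_refines (n : nat) (P P' : {set {set 'I_n}}) : Prop :=
  refines P P' /\ P != P'.

(* Main.v *)
Require Import Defs.
From HB Require Import structures.
From mathcomp Require Import all_boot all_order all_algebra.
From mathcomp Require Import all_classical all_reals all_analysis.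
From mathcomp Require Import fingroup perm ring.
Import Order.TTheory GRing.Theory Num.Theory numFieldNormedType.Exports.
Local Open Scope ring_scope.
Section Lin.
Variables (R : realType) (n : nat) (I : finType) (T : ('I_n -> (I -> R)) -> R).
Hypothesis hlin : forall (V : 'I_n -> (I -> R)) (k : 'I_n) (a : R) (x y : I -> R),
    T (upd V k (fun i => a * x i + y i)) = a * T (upd V k x) + T (upd V k y).

Lemma lin0 V k : T (upd V k (fun _ => 0)) = 0.
Proof.
have := hlin V k 1 (fun _ => 0) (fun _ => 0).
have -> : (fun _ : I => 1 * 0 + 0 : R) = (fun _ => 0) by apply: funext => i; rewrite mulr0 addr0.
rewrite mul1r => h; apply: (@addrI _ (T (upd V k (fun _ => 0)))).
by rewrite addr0 -h.
Qed.

Lemma linsum (J : Type) (s : seq J) (F : J -> I -> R) V k :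
  T (upd V k (fun i => \sum_(j <- s) F j i)) = \sum_(j <- s) T (upd V k (F j)).
Proof.
elim: s => [|j s IH].
  rewrite big_nil; transitivity (T (upd V k (fun _ => 0))); last exact: lin0.
  by congr T; apply: funext => l; rewrite /upd; case: eqP => // _; apply: funext => i; rewrite big_nil.
rewrite big_cons -IH -[T (upd V k (F j))]mul1r -hlin; congr T.
by apply: funext => l; rewrite /upd; case: eqP => // _; apply: funext => i; rewrite big_cons mul1r.
Qed.

Lemma expand_r (J : finType) (j0 : J) (F : 'I_n -> J -> I -> R) (r : seq 'I_n) :
  uniq r -> forall V,
  T (fun k => if k \in r then (fun i => \sum_j F k j i) else V k) =
  \sum_(f in pfamily j0 r (fun _ => predT)) T (fun k => if k \in r then F k (f k) else V k).
Proof.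
elim: r => [_ V | i r IHr].
  rewrite (big_pred1 [ffun=> j0]) /=; last first.
    move=> f; apply/familyP/eqP => /= [Df |->{f} i]; last by rewrite ffunE !inE.
    by apply/ffunP=> i; rewrite ffunE; apply/eqP; have := Df i; rewrite !inE.
  by [].
case/andP=> /negbTE nri Ur V.
pose W k := if k \in r then (fun x => \sum_j F k j x) else V k.
have -> : (fun k => if k \in i :: r then (fun x => \sum_j F k j x) else V k)
   = upd W i (fun x => \sum_j F i j x).
  apply: funext => k; rewrite /upd /W inE; case: eqP => [->|_] //=.
rewrite linsum.
pose fIJ := {ffun 'I_n -> J}.
rewrite (partition_big (fun f : fIJ => f i) predT) => [|f]; last by [].
apply: eq_bigr => j _.
have -> : T (upd W i (F i j)) = T (fun k => if k \in r then (fun x => \sum_j F k j x) else upd V i (F i j) k).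
  congr T; apply: funext => k; rewrite /upd /W; case: eqP => [->|_] //; by rewrite nri.
rewrite (IHr Ur).
pose seti j (f : fIJ) := [ffun k => if k == i then j else f k].
symmetry.
rewrite (reindex_onto (seti j) (seti j0)) => [|f /andP[_ /eqP fi]]; last first.
  by apply/ffunP=> k; rewrite !ffunE; case: eqP => // ->.
apply: eq_big => [f | f eq_f]; last first.
  congr T; apply: funext => k; rewrite /upd inE !ffunE; case: eqP => [->|_] /=; first by rewrite nri.
  by [].
rewrite !ffunE !eqxx andbT; apply/andP/familyP=> /= [[Pjf fij0] k | Pff].
  have /[!(ffunE, inE)] := familyP Pjf k; case: eqP => // -> _.
  by rewrite nri -(eqP fij0) !ffunE !inE !eqxx.
(split; [apply/familyP | apply/eqP/ffunP]) => k; have /[!(ffunE, inE)]:= Pff k.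
  by case: eqP => // ->.
by case: eqP => // ->; rewrite nri /= => /eqP.
Qed.

Lemma expand (J : finType) (j0 : J) (F : 'I_n -> J -> I -> R) :
  T (fun k i => \sum_j F k j i) = \sum_(f : {ffun 'I_n -> J}) T (fun k => F k (f k)).
Proof.
have := @expand_r J j0 F _ (enum_uniq 'I_n) (fun k => F k j0).
have E : forall (X : 'I_n -> I -> R) (Y : 'I_n -> I -> R), (fun k => if k \in enum 'I_n then X k else Y k) = X.
  by move=> X Y; apply: funext => k; rewrite mem_enum.
rewrite E => ->; apply: eq_big => [f|f _]; last by rewrite E.
by apply/familyP => k /=; rewrite mem_enum !inE.
Qed.
Lemma scal_r (c : R) (X : 'I_n -> I -> R) (r : seq 'I_n) : uniq r ->
  T (fun k => if k \in r then (fun i => c * X k i) else X k) = c ^+ size r * T X.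
Proof.
elim: r => [_|i r IHr]; first by rewrite expr0 mul1r.
case/andP=> /negbTE nri Ur.
pose W k := if k \in r then (fun x => c * X k x) else X k.
have -> : (fun k => if k \in i :: r then (fun x => c * X k x) else X k)
   = upd W i (fun x => c * X i x + 0).
  apply: funext => k; rewrite /upd /W inE; case: eqP => [->|_] //=.
  by apply: funext => x; rewrite addr0.
rewrite hlin lin0 addr0.
have -> : upd W i (X i) = (fun k => if k \in r then (fun x => c * X k x) else X k).
  apply: funext => k; rewrite /upd /W; case: eqP => [->|_] //; by rewrite nri.
by rewrite IHr // exprS mulrA.
Qed.

Lemma scal (c : R) (X : 'I_n -> I -> R) :
  T (fun k i => c * X k i) = c ^+ n * T X.
Proof.
have := @scal_r c X _ (enum_uniq 'I_n); rewrite size_enum_ord => <-.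
by congr T; apply: funext => k; rewrite mem_enum.
Qed.
End Lin.
Section Part.
Variable n : nat.

Lemma pb_part (I : finType) (u : 'I_n -> I) k l :
  (l \in finset.pblock (part_of u) k) = (u k == u l).
Proof.
by apply: pblock_equivalence_partition; rewrite ?inE //; split=> // /eqP->.
Qed.

Lemma part_eq (I J : finType) (u : 'I_n -> I) (v : 'I_n -> J) :
  (part_of u = part_of v) <-> (forall k l, (u k == u l) = (v k == v l)).
Proof.
split=> [h k l | h]; first by rewrite -!pb_part h.
rewrite /part_of /preim_partition /equivalence_partition.
by apply: eq_imset => x; apply/setP => y; rewrite !inE h.
Qed.

Lemma part_refines (I J : finType) (w : 'I_n -> I) (u : 'I_n -> J) :
  (forall k l, w k == w l -> u k == u l) -> refines (part_of w) (part_of u).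
Proof.
move=> h B /imsetP [x _ ->]; exists (finset.pblock (part_of u) x).
  apply: finset.pblock_mem; have [/eqP -> _ _] := and3P (preim_partitionP u [set: 'I_n]).
  by rewrite inE.
by apply/fintype.subsetP => y; rewrite !inE pb_part => /h.
Qed.

Lemma part_partition (I : finType) (u : 'I_n -> I) : finset.partition (part_of u) [set: 'I_n].
Proof. exact: preim_partitionP. Qed.

End Part.

Lemma extend_perm (J : finType) (A : {set J}) (phi : J -> J) :
  {in A &, injective phi} -> exists s : {perm J}, {in A, forall x, s x = phi x}.
Proof.
move=> injphi.
pose B := phi @: A.
have cAB : #|B| = #|A| by apply: card_in_imset.
pose sA := enum (~: A); pose sB := enum (~: B).
have ssz : size sA = size sB.
  rewrite /sA /sB -!cardE; apply/eqP; rewrite -(eqn_add2l #|A|) cardsC -cAB cardsC //.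
pose f x := if x \in A then phi x else nth x sB (index x sA).
have fnA x : x \notin A -> f x \in ~: B.
  move=> xA; rewrite /f (negbTE xA).
  have : nth x sB (index x sA) \in sB by apply: mem_nth; rewrite -ssz index_mem mem_enum inE.
  by rewrite mem_enum.
have finj : injective f.
  move=> x y; case xA: (x \in A); case yA: (y \in A).
  - by rewrite /f xA yA => /injphi; apply.
  - have := fnA y (negbT yA); rewrite /f xA => + E; rewrite -E inE => /negP []; exact: imset_f.
  - have := fnA x (negbT xA); rewrite /f yA => + E; rewrite E inE => /negP []; exact: imset_f.
  - rewrite /f xA yA => E.
    have hx : (index x sA < size sB)%N by rewrite -ssz index_mem mem_enum inE xA.
    have hy : (index y sA < size sB)%N by rewrite -ssz index_mem mem_enum inE yA.
    have E' : nth x sB (index x sA) == nth x sB (index y sA) by rewrite E (set_nth_default x).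
    move: E'; rewrite nth_uniq ?enum_uniq // => /eqP E2.
    have mx : x \in sA by rewrite mem_enum inE xA.
    have my : y \in sA by rewrite mem_enum inE yA.
    by rewrite -(nth_index x mx) E2 (nth_index x my).
exists (perm finj) => x xA; by rewrite permE /f xA.
Qed.
Section Fam.
Variables (R : realType) (n : nat) (Theta : forall I : finType, tensor_field R n I).
Hypothesis hTheta : congruent_family Theta.

Definition th (I : finType) (lam : R) (u : 'I_n -> I) :=
  Theta I (scaled_c (I:=I) lam) (fun k => delta_pt R (u k)).

Lemma hlinT (I : finType) mu : posmeas mu -> forall (V : 'I_n -> (I -> R)) (k : 'I_n) (a : R) (x y : I -> R),
    Theta I mu (upd V k (fun i => a * x i + y i)) = a * Theta I mu (upd V k x) + Theta I mu (upd V k y).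
Proof. by move=> hmu; have [/(_ I) [hl _] _] := hTheta; exact: hl. Qed.

Lemma scaled_pos (I : finType) lam : 0 < lam -> (0 < #|I|)%N -> posmeas (scaled_c (R:=R) (I:=I) lam).
Proof. by move=> hl hI i; rewrite /scaled_c divr_gt0 // ltr0n. Qed.

Lemma bij_th (I I' : finType) (e : I -> I') (e' : I' -> I) :
  cancel e e' -> cancel e' e -> forall lam, 0 < lam -> (0 < #|I|)%N ->
  forall u, th I' lam (e \o u) = th I lam u.
Proof.
move=> ee' e'e lam hl hI u.
pose K (i : I) (i' : I') : R := (i' == e i)%:R.
have pushK x : push K x = x \o e'.
  apply: funext => i'; rewrite /push (bigD1 (e' i')) //= /K e'e eqxx mul1r big1 ?addr0 //.
  by move=> i /negbTE hi; case: eqP => [h|]; [rewrite h ee' eqxx in hi | rewrite mul0r].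
have cK : congruent_kernel K.
  split; first split.
  - by move=> i i'; rewrite /K ler0n.
  - move=> i; rewrite (bigD1 (e i)) //= /K eqxx big1 ?addr0 // => i' hi; by rewrite (negbTE hi).
  exists e' => i i' hne; rewrite /K; case: eqP => // hi; by rewrite hi ee' eqxx in hne.
have pK : forall mu, posmeas mu -> posmeas (push K mu).
  by move=> mu hmu i'; rewrite pushK; apply: hmu.
have card : #|I| = #|I'| by apply: (bij_eq_card (f := e)); exists e'.
have := hTheta.2 _ _ K cK pK _ (@scaled_pos I lam hl hI) (fun k => delta_pt R (u k)).
rewrite /th => <-; congr Theta.
  by rewrite pushK; apply: funext => i' /=; rewrite /scaled_c card.
apply: funext => k; rewrite pushK; apply: funext => i' /=; rewrite /delta_pt.
have -> : (i' == e (u k)) = (e' i' == u k).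
  by apply/eqP/eqP => [->|<-]; rewrite ?ee' ?e'e.
by [].
Qed.
Lemma sym_th (J : finType) lam (u v : 'I_n -> J) : 0 < lam -> (0 < #|J|)%N ->
  part_of u = part_of v -> th J lam u = th J lam v.
Proof.
move=> hl hJ /part_eq huv.
pose A := [set u k | k : 'I_n].
pose phi x := if [pick k | u k == x] is Some k then v k else x.
have phiu k : phi (u k) = v k.
  rewrite /phi; case: pickP => [k' /eqP hk'|/(_ k)]; last by rewrite eqxx.
  by apply/eqP; rewrite -huv hk'.
have injphi : {in A &, injective phi}.
  move=> _ _ /imsetP[k _ ->] /imsetP[l _ ->]; rewrite !phiu => /eqP; rewrite -huv => /eqP //.
have [s hs] := @extend_perm J A phi injphi.
have -> : v = s \o u by apply: funext => k /=; rewrite hs ?phiu // imset_f.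
by symmetry; apply: (@bij_th J J s (s^-1)%g) => //; [exact: (permK s) | exact: (permKV s)].
Qed.
End Fam.
Arguments th {R n} Theta I lam u.
Arguments sym_th {R n Theta} hTheta {J} lam {u v} _ _ _.
Arguments hlinT {R n Theta} hTheta {I mu} _ V k a x y.
Arguments bij_th {R n Theta} hTheta {I I'} e e' _ _ lam _ _ u.
Section Cont.
Variables (R : realType) (n : nat) (Theta : forall I : finType, tensor_field R n I).
Hypothesis hTheta : congruent_family Theta.

Lemma cont_th (I : finType) (V : 'I_n -> I -> R) : (0 < #|I|)%N ->
  {within [set x : R | 0 < x], continuous (fun lam => Theta I (scaled_c (I:=I) lam) V)}%classic.
Proof.
move=> hI; rewrite continuous_open_subspace; last exact: open_gt.
move=> x; rewrite ?in_setE /= => hx.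
apply/cvgrPdist_lt => eps heps.
have [/(_ I) [_ hc] _] := hTheta.
have [d hd H] := hc V _ (@scaled_pos R I x hx hI) eps heps.
have cpos : 0 < #|I|%:R :> R by rewrite ltr0n.
pose e : R := Num.min x (d * #|I|%:R).
have he : 0 < e by rewrite /e lt_min hx mulr_gt0.
have e1 : e <= x by rewrite /e ge_min lexx.
have e2 : e <= d * #|I|%:R by rewrite /e ge_min lexx orbT.
apply/nbhs_normP; exists e => //= t ht.
have h1 := lt_le_trans ht e1; have h2 := lt_le_trans ht e2.
rewrite distrC; apply: H.
  apply: scaled_pos => //.
  by move: h1; rewrite ltr_norml => /andP[_]; rewrite ltrBlDl -ltrBlDr subrr.
move=> i; rewrite /scaled_c -mulrBl normrM normfV normr_nat.
by rewrite ltr_pdivrMr // distrC.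
Qed.
End Cont.
Section Count.
Variables (n : nat) (P0 : {set {set 'I_n}}).
Hypothesis hP0 : finset.partition P0 [set: 'I_n].

Lemma P0_le : (#|P0| <= n)%N.
Proof.
have [/eqP hcov htriv hnz] := and3P hP0.
have sub : P0 \subset [set finset.pblock P0 k | k : 'I_n].
  apply/fintype.subsetP => B BP.
  have /set0Pn [k kB] : B != finset.set0 by apply: contraNneq hnz => <-.
  by apply/imsetP; exists k => //; rewrite (finset.def_pblock htriv BP kB).
by apply: leq_trans (subset_leq_card sub) _; rewrite (leq_trans (leq_imset_card _ _)) // card_ord.
Qed.

Lemma count_blocks (I J : finType) (j0 : J) (iv : 'I_n -> I) : part_of iv = P0 ->
  #|[set g : {ffun 'I_n -> J} | part_of (fun k => (iv k, g k)) == P0]| = (#|J| ^ #|P0|)%N.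
Proof.
move=> hpart.
have [/eqP hcov htriv hnz] := and3P hP0.
have memk k : k \in finset.cover P0 by rewrite hcov inE.
pose S := {B : {set 'I_n} | B \in P0}.
pose blk k : S := exist _ (finset.pblock P0 k) (finset.pblock_mem (memk k)).
pose Phi (phi : {ffun S -> J}) : {ffun 'I_n -> J} := [ffun k => phi (blk k)].
have hpiv k l : (l \in finset.pblock P0 k) = (iv k == iv l) by rewrite -hpart pb_part.
have Phi_inj : injective Phi.
  move=> p1 p2 E; apply/ffunP => B.
  have /set0Pn [k kB] : val B != finset.set0 by apply: contraNneq hnz => <-; exact: (valP B).
  have bk : blk k = B by apply: val_inj; rewrite /= (finset.def_pblock htriv (valP B) kB).
  by rewrite -bk; move: (congr1 (fun f : {ffun 'I_n -> J} => f k) E); rewrite !ffunE.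
have -> : [set g : {ffun 'I_n -> J} | part_of (fun k => (iv k, g k)) == P0] = Phi @: [set: {ffun S -> J}].
  apply/setP => g; rewrite inE; apply/eqP/imsetP.
  - move=> hg.
    have hw : forall k l, ((iv k, g k) == (iv l, g l)) = (iv k == iv l).
      by have := (@part_eq n _ _ (fun k => (iv k, g k)) iv).1; rewrite hg hpart; apply.
    exists [ffun B : S => if [pick k in val B] is Some k then g k else j0]; first by [].
    apply/ffunP => k; rewrite !ffunE /=; case: pickP => [k' hk' | /(_ k)]; last first.
      by rewrite /= finset.mem_pblock memk.
    move: hk'; rewrite hpiv -hw => /eqP [] //.
  - move=> [phi _ ->]; transitivity (part_of iv); last exact: hpart.
    apply: (@part_eq n _ _ (fun k => (iv k, Phi phi k)) iv).2 => k l; rewrite /= !ffunE xpair_eqE.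
    case E: (iv k == iv l) => //=.
    have -> : blk k = blk l.
      apply: val_inj => /=; apply/esym/finset.same_pblock => //; by rewrite hpiv.
    by rewrite eqxx.
rewrite card_imset // cardsT card_ffun card_sig.
by congr (_ ^ _)%N; apply: eq_card.
Qed.
End Count.
Lemma alg_helper (R : realType) (c t : R) (N m k : nat) : c != 0 -> k = (N + m)%N ->
  t = c ^+ N * (c^-1 ^+ k * (c ^+ m * t)).
Proof. move=> hc ->; rewrite exprVn exprD; field; by rewrite !expf_neq0. Qed.

Section Prod.
Variables (R : realType) (n : nat) (Theta : forall I : finType, tensor_field R n I).
Hypothesis hTheta : congruent_family Theta.
Variables (P0 : {set {set 'I_n}}).
Hypothesis hP0 : finset.partition P0 [set: 'I_n].
Hypothesis hzero : forall P : {set {set 'I_n}}, finset.partition P [set: 'I_n] ->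
     strictly_refines P P0 ->
     forall (lambda : R), 0 < lambda ->
     forall (I : finType), (0 < #|I|)%N ->
     forall iv : 'I_n -> I, part_of iv = P ->
       Theta I (scaled_c (I:=I) lambda) (fun k => delta_pt R (iv k)) = 0.

Lemma prod_th (I J : finType) (j0 : J) lam (iv : 'I_n -> I) (w : 'I_n -> I * J) :
  0 < lam -> (0 < #|I|)%N -> part_of iv = P0 -> part_of w = P0 ->
  th Theta (I * J)%type lam w = #|J|%:R ^+ (n - #|P0|) * th Theta I lam iv.
Proof.
move=> hl hI hiv hw.
have hJ : (0 < #|J|)%N by apply/card_gt0P; exists j0.
have hIJ : (0 < #|{: I * J}|)%N by rewrite card_prod muln_gt0 hI hJ.
pose c : R := #|J|%:R.
have c0 : c != 0 by rewrite pnatr_eq0 -lt0n.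
pose K (i : I) (p : I * J) : R := (p.1 == i)%:R / c.
have pushK x : push K x = fun p => x p.1 / c.
  apply: funext => p; rewrite /push (bigD1 p.1) //= /K eqxx mul1r big1 ?addr0; first by rewrite mulrC.
  by move=> i hi; rewrite eq_sym (negbTE hi) !mul0r.
have cK : congruent_kernel K.
  split; first split.
  - by move=> i p; rewrite /K divr_ge0 ?ler0n.
  - move=> i; rewrite -(pair_bigA _ (fun a j => K i (a, j))) /= (bigD1 i) //= [X in _ + X]big1 ?addr0.
      rewrite /K /= eqxx sumr_const mulr1n div1r -mulr_natr; exact: mulVf c0.
    by move=> a ha; apply: big1 => j _; rewrite /K /= (negbTE ha) mul0r.
  - by exists fst => i p hne; rewrite /K (negbTE hne) mul0r.
have pK mu : posmeas mu -> posmeas (push K mu).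
  by move=> hmu p; rewrite pushK divr_gt0 // ltr0n.
have := hTheta.2 _ _ K cK pK _ (@scaled_pos R I lam hl hI) (fun k => delta_pt R (iv k)).
rewrite {2}/th => <-.
have -> : push K (scaled_c lam) = scaled_c (I:=(I * J)%type) lam.
  rewrite pushK; apply: funext => p; by rewrite /scaled_c card_prod natrM invfM mulrA.
have -> : (fun k => push K (delta_pt R (iv k))) = (fun k p => \sum_(j : J) (c^-1 * delta_pt R (iv k, j) p)).
  apply: funext => k; rewrite pushK; apply: funext => p; rewrite (bigD1 p.2) //= big1 ?addr0.
    rewrite /delta_pt; case: p => a b /=; rewrite xpair_eqE eqxx andbT.
    by case: (a == iv k); rewrite ?mul1r ?mulr1 ?mul0r ?mulr0.
  move=> j hj; rewrite /delta_pt; case: eqP => [hp|]; last by rewrite mulr0.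
  by rewrite hp /= eqxx in hj.
rewrite (@expand R n _ _ (hlinT hTheta (@scaled_pos R _ lam hl hIJ)) J j0).
have S : forall g : {ffun 'I_n -> J},
   Theta _ (scaled_c lam) (fun k p => c^-1 * delta_pt R (iv k, g k) p) =
   c^-1 ^+ n * ((part_of (fun k => (iv k, g k)) == P0)%:R * th Theta (I * J)%type lam w).
  move=> g; rewrite (@scal R n _ _ (hlinT hTheta (@scaled_pos R _ lam hl hIJ))); congr (_ * _).
  case: eqP => hg.
    rewrite mul1r; apply: (sym_th hTheta) => //; by rewrite hg hw.
  have sr : strictly_refines (part_of (fun k => (iv k, g k))) P0.
    split; last by apply/eqP.
    rewrite -hiv; apply: part_refines => k l; rewrite xpair_eqE => /andP[] //.
  have h0 := hzero _ (@part_partition n _ (fun k => (iv k, g k))) sr lam hl _ hIJ (fun k => (iv k, g k)) erefl.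
  rewrite mul0r; exact: h0.
rewrite (eq_bigr _ (fun g _ => S g)) -big_distrr /= -big_distrl /=.
have -> : \sum_(g : {ffun 'I_n -> J}) (part_of (fun k => (iv k, g k)) == P0)%:R = (#|J| ^ #|P0|)%:R :> R.
  rewrite -(@count_blocks n P0 hP0 I J j0 iv hiv) -sum1_card natr_sum.
  rewrite [RHS]big_mkcond; apply: eq_bigr => g _; rewrite inE; by case: eqP.
rewrite natrX -/c; apply: alg_helper => //; by rewrite subnK // (@P0_le n P0 hP0).
Qed.
End Prod.
Theorem lemma4p6 (R : realType) (n : nat)
  (Theta : forall I : finType, tensor_field R n I)
  (hTheta : congruent_family Theta)
  (P0 : {set {set 'I_n}}) (hP0 : finset.partition P0 [set: 'I_n])
  (hzero : forall P : {set {set 'I_n}}, finset.partition P [set: 'I_n] ->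
     strictly_refines P P0 ->
     forall (lambda : R), 0 < lambda ->
     forall (I : finType), (0 < #|I|)%N ->
     forall iv : 'I_n -> I, part_of iv = P ->
       Theta I (scaled_c (I:=I) lambda) (fun k => delta_pt R (iv k)) = 0) :
  exists f : R -> R,
    {within [set x : R | 0 < x], continuous f}%classic /\
    forall (lambda : R), 0 < lambda ->
    forall (I : finType), (0 < #|I|)%N ->
    forall iv : 'I_n -> I, part_of iv = P0 ->
      Theta I (scaled_c (I:=I) lambda) (fun k => delta_pt R (iv k))
        = f lambda * (#|I|%:R) ^+ (n - #|P0|).
Proof.
pose iv0 := fun k : 'I_n => finset.pblock P0 k.
have hiv0 : part_of iv0 = P0 := finset.preim_partition_pblock hP0.
have hI0 : (0 < #|{: {set 'I_n}}|)%N by apply/card_gt0P; exists finset.set0.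
pose c0 : R := #|{: {set 'I_n}}|%:R ^+ (n - #|P0|).
have c0n : c0 != 0 by rewrite expf_neq0 // pnatr_eq0 -lt0n.
exists (fun lam => th Theta {set 'I_n} lam iv0 / c0); split.
  have hc := @cont_th R n Theta hTheta _ (fun k => delta_pt R (iv0 k)) hI0.
  rewrite continuous_open_subspace in hc; last exact: open_gt.
  rewrite continuous_open_subspace; last exact: open_gt.
  by move=> x hx; apply: cvgMr_tmp; exact: hc.
move=> lam hl I hI iv hiv.
have /card_gt0P [j0 _] := hI.
have hsame : forall k l, (iv k == iv l) = (iv0 k == iv0 l).
  by apply: (@part_eq n _ _ iv iv0).1; rewrite hiv hiv0.
pose w := fun k => (iv k, iv0 k).
pose w' := fun k => (iv0 k, iv k).
have hw : part_of w = P0.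
  apply: etrans _ hiv; apply: (@part_eq n _ _ w iv).2 => k l.
  by rewrite /w xpair_eqE -hsame andbb.
have hw' : part_of w' = P0.
  apply: etrans _ hiv; apply: (@part_eq n _ _ w' iv).2 => k l.
  by rewrite /w' xpair_eqE -hsame andbb.
have E1 := @prod_th R n Theta hTheta P0 hP0 hzero I {set 'I_n} finset.set0 lam iv w hl hI hiv hw.
have E2 := @prod_th R n Theta hTheta P0 hP0 hzero {set 'I_n} I j0 lam iv0 w' hl hI0 hiv0 hw'.
have hII0 : (0 < #|{: I * {set 'I_n}}|)%N by rewrite card_prod muln_gt0 hI hI0.
have sw1 : cancel (fun p : I * {set 'I_n} => (p.2, p.1)) (fun p : {set 'I_n} * I => (p.2, p.1)) by case.
have sw2 : cancel (fun p : {set 'I_n} * I => (p.2, p.1)) (fun p : I * {set 'I_n} => (p.2, p.1)) by case.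
have E3 := @bij_th R n Theta hTheta (I * {set 'I_n})%type ({set 'I_n} * I)%type
   (fun p => (p.2, p.1)) (fun p => (p.2, p.1)) sw1 sw2 lam hl hII0 w.
have key : c0 * th Theta I lam iv = #|I|%:R ^+ (n - #|P0|) * th Theta {set 'I_n} lam iv0.
  by rewrite -E1 -E2 -E3.
change (th Theta I lam iv = th Theta {set 'I_n} lam iv0 / c0 * #|I|%:R ^+ (n - #|P0|)).
rewrite -[th Theta I lam iv](mulKf c0n) key.
by rewrite mulrCA [RHS]mulrC; congr (_ * _); rewrite mulrC.
Qed.
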